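(* Let $\alpha\in(1,2)$ and let $p\ge2$ be an integer (so $p>\alpha$). Then $f^{p,\alpha}(\theta)=f^{p,\alpha}(-\theta)$ for all $\theta$, and there is a constant $C_{p,\alpha}$ depending only on $p$ and $\alpha$ such that for all $\theta\in[0,\pi]$ $$|\theta|^\alpha\left(\frac{\sin(\theta/2)}{\theta/2}\right)^{p+1}\le f^{p,\alpha}(\theta)\le |\theta|^\alpha\left(\frac{\sin(\theta/2)}{\theta/2}\right)^{p+1}+C_{p,\alpha}\left(\sin(\theta/2)\right)^{p+1}.$$ Moreover, $$\frac{f^{p,\alpha}(\pi)}{\max_\theta f^{p,\alpha}(\theta)}\le\frac{f^{p,\alpha}(\pi)}{f^{p,\alpha}(\pi/2)}\le 2^{\frac{2\alpha+1-p}{2}}.$$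
   Context: For real $\alpha$ and integer $p\ge 2$, $f^{p,\alpha}(\theta)=\sum_{l\in\mathbb Z}|\theta+2l\pi|^{\alpha}\left(\frac{\sin(\theta/2+l\pi)}{\theta/2+l\pi}\right)^{p+1}$ (with the value at $\theta/2+l\pi=0$ of $\frac{\sin x}{x}$ taken as $1$). *)

(* Defs.v *)
From Stdlib Require Import Reals Lra.
From Coquelicot Require Import Coquelicot.
Open Scope R_scope.

(* |x|^a for real a, with the convention 0^a = 0 (relevant for a > 0). *)
Definition rabs_pow (x a : R) : R :=
  if Req_EM_T x 0 then 0 else Rpower (Rabs x) a.

Definition sinc (x : R) : R :=
  if Req_EM_T x 0 then 1 else sin x / x.

Definition f_term (p : nat) (alpha theta : R) (l : Z) : R :=
  rabs_pow (theta + 2 * IZR l * PI) alpha *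
  (sinc (theta / 2 + IZR l * PI)) ^ (p + 1).

Definition f_pa (p : nat) (alpha theta : R) : R :=
  Series (fun n : nat => f_term p alpha theta (Z.of_nat n)) +
  Series (fun n : nat => f_term p alpha theta (- Z.of_nat (S n))%Z).

(* Main.v *)
Require Import Defs.
From Stdlib Require Import Reals Lra Lia.
From Coquelicot Require Import Coquelicot.
Open Scope R_scope.

Lemma exp_le' x y : x <= y -> exp x <= exp y.
Proof. intros [H|H]; [left; apply exp_increasing; auto | right; subst; auto]. Qed.

Lemma Rpower_pos x y : 0 < Rpower x y.
Proof. unfold Rpower; apply exp_pos. Qed.

Lemma Rpower_one y : Rpower 1 y = 1.
Proof. unfold Rpower; rewrite ln_1, Rmult_0_r; apply exp_0. Qed.

Lemma Rpower_base_decr a b c : 0 < a -> a <= b -> c <= 0 -> Rpower b c <= Rpower a c.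
Proof. intros Ha Hab Hc. unfold Rpower. apply exp_le'.
  assert (ln a <= ln b) by (apply ln_le; auto). nra. Qed.

Lemma ln_le_xm1 t : 0 < t -> ln t <= t - 1.
Proof. intros Ht. pose proof (exp_ineq1_le (ln t)) as H. rewrite exp_ln in H; lra. Qed.

Lemma bernoulli r b x : r < 0 -> 0 < b -> 0 < x ->
  Rpower b r + r * Rpower b (r - 1) * (x - b) <= Rpower x r.
Proof.
  intros Hr Hb Hx.
  set (E := exp (r * ln b)).
  assert (HE : 0 < E) by apply exp_pos.
  assert (H1 : Rpower b (r - 1) = E * / b).
  { unfold Rpower, E. replace ((r - 1) * ln b) with (r * ln b + - ln b) by ring.
    rewrite exp_plus, exp_Ropp, exp_ln; auto. }
  assert (H2 : Rpower x r = E * exp (r * ln (x / b))).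
  { unfold Rpower, E. rewrite ln_div by auto. rewrite <- exp_plus. f_equal. ring. }
  assert (H3 : Rpower b r = E) by reflexivity.
  rewrite H1, H2, H3.
  assert (Ht : 0 < x / b) by (apply Rdiv_lt_0_compat; auto).
  pose proof (ln_le_xm1 _ Ht) as H4.
  pose proof (exp_ineq1_le (r * ln (x / b))) as H5.
  assert (H6 : r * (E * / b) * (x - b) = E * (r * (x / b - 1))) by (field; lra).
  rewrite H6.
  assert (r * (x / b - 1) <= r * ln (x / b)) by nra.
  nra.
Qed.

Lemma zeta_ex bt : bt < -1 -> ex_series (fun n => Rpower (INR n + 1) bt).
Proof.
  intros Hb. set (g := -(bt+1)). assert (Hg : 0 < g) by (unfold g; lra).
  set (a := fun n => Rpower (INR n + 1) bt).
  assert (step : forall n, a (S n) <= (Rpower (INR n + 1) (bt+1) - Rpower (INR n + 2) (bt+1)) / g).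
  { intros n. unfold a. rewrite S_INR.
    pose proof (bernoulli (bt+1) (INR n + 2) (INR n + 1)) as B.
    replace (bt + 1 - 1) with bt in B by ring.
    assert (0 <= INR n) by apply pos_INR.
    replace (INR n + 1 + 1) with (INR n + 2) by ring.
    apply Rmult_le_reg_r with g; auto. unfold Rdiv. rewrite Rmult_assoc, Rinv_l by lra.
    unfold g. specialize (B ltac:(lra) ltac:(lra) ltac:(lra)). nra. }
  assert (bound : forall N, sum_n a N <= 1 + (1 - Rpower (INR N + 1) (bt+1)) / g).
  { induction N.
    - rewrite sum_O. unfold a. simpl. replace (0+1) with 1 by ring. rewrite !Rpower_one. lra.
    - rewrite sum_Sn. change (plus (sum_n a N) (a (S N))) with (sum_n a N + a (S N)).
      pose proof (step N). rewrite S_INR. replace (INR N + 1 + 1) with (INR N + 2) by ring.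
      unfold Rdiv in *. lra. }
  assert (Hinc : forall n, sum_n a n <= sum_n a (S n)).
  { intros n. rewrite sum_Sn. change (plus (sum_n a n) (a (S n))) with (sum_n a n + a (S n)).
    pose proof (Rpower_pos (INR (S n) + 1) bt). unfold a. lra. }
  destruct (ex_finite_lim_seq_incr (sum_n a) (1 + 1 / g) Hinc) as [l Hl].
  { intros n. pose proof (bound n). pose proof (Rpower_pos (INR n + 1) (bt + 1)).
    unfold Rdiv in *. assert (0 < / g) by (apply Rinv_0_lt_compat; auto). nra. }
  exists l. exact Hl.
Qed.

Definition bet (p : nat) (a : R) := a - INR (p + 1).

Lemma cos_nPI n : cos (INR n * PI) = (-1)^n.
Proof. induction n.
  - simpl. rewrite Rmult_0_l, cos_0. ring.
  - rewrite S_INR, Rmult_plus_distr_r, Rmult_1_l, neg_cos, IHn. simpl. ring. Qed.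

Lemma sin_nPI n : sin (INR n * PI) = 0.
Proof. apply sin_eq_0_1. exists (Z.of_nat n). rewrite INR_IZR_INZ. auto. Qed.

Lemma rabs_pow_opp x a : rabs_pow (- x) a = rabs_pow x a.
Proof. unfold rabs_pow. destruct (Req_EM_T (-x) 0); destruct (Req_EM_T x 0); try lra.
  rewrite Rabs_Ropp; auto. Qed.

Lemma sinc_opp x : sinc (- x) = sinc x.
Proof. unfold sinc. destruct (Req_EM_T (-x) 0); destruct (Req_EM_T x 0); try lra.
  rewrite sin_neg. field. auto. Qed.

Lemma f_term_eq p al th l : f_term p al th l =
  rabs_pow (th + 2*IZR l*PI) al * sinc ((th + 2*IZR l*PI)/2) ^ (p+1).
Proof. unfold f_term. do 3 f_equal. field. Qed.

Lemma pow_helper al p X w : 0 < X ->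
  Rpower X al * (w / X) ^ (p+1) = w ^ (p+1) * Rpower X (al - INR (p+1)).
Proof. intros. unfold Rminus. rewrite Rpower_plus, Rpower_Ropp, Rpower_pow by auto.
 unfold Rdiv. rewrite Rpow_mult_distr, pow_inv. ring. Qed.

Lemma core p al X : 0 < X ->
  rabs_pow X al * (sinc (X/2))^(p+1) = (2 * sin (X/2))^(p+1) * Rpower X (bet p al).
Proof. intros H. unfold rabs_pow, sinc.
  destruct (Req_EM_T X 0); [lra|]. destruct (Req_EM_T (X/2) 0); [lra|].
  rewrite Rabs_right by lra.
  replace (sin (X/2) / (X/2)) with (2 * sin (X/2) / X) by (field; lra).
  apply pow_helper; auto. Qed.

Lemma TFpos p al th n : 0 < th + 2 * INR n * PI ->
  f_term p al th (Z.of_nat n) =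
  (2 * sin (th/2))^(p+1) * ((-1)^n)^(p+1) * Rpower (th + 2*INR n*PI) (bet p al).
Proof.
  intros H. rewrite f_term_eq, <- INR_IZR_INZ, core by auto.
  replace ((th + 2 * INR n * PI) / 2) with (th/2 + INR n * PI) by field.
  rewrite sin_plus, sin_nPI, cos_nPI, Rmult_0_r, Rplus_0_r.
  replace (2 * (sin (th / 2) * (-1) ^ n)) with ((2 * sin (th/2)) * (-1)^n) by ring.
  rewrite Rpow_mult_distr. ring.
Qed.

Lemma TFneg p al th n : th - 2 * INR (S n) * PI < 0 ->
  f_term p al th (- Z.of_nat (S n)) =
  (2 * sin (th/2))^(p+1) * ((-1)^n)^(p+1) * Rpower (2*INR (S n)*PI - th) (bet p al).
Proof.
  intros H. rewrite f_term_eq, opp_IZR, <- INR_IZR_INZ.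
  replace (th + 2 * - INR (S n) * PI) with (- (2*INR (S n)*PI - th)) by ring.
  rewrite rabs_pow_opp.
  replace (- (2 * INR (S n) * PI - th) / 2) with (- ((2 * INR (S n) * PI - th) / 2)) by field.
  rewrite sinc_opp, core by lra.
  replace ((2 * INR (S n) * PI - th) / 2) with (INR (S n) * PI + - (th/2)) by field.
  rewrite sin_plus, sin_nPI, cos_nPI, sin_neg, cos_neg, Rmult_0_l, Rplus_0_l.
  replace (2 * ((-1) ^ S n * - sin (th / 2))) with ((2 * sin (th/2)) * (-1)^n) by (simpl; ring).
  rewrite Rpow_mult_distr. ring.
Qed.

Lemma TB p al th l : th + 2*IZR l*PI <> 0 ->
  Rabs (f_term p al th l) <= 2^(p+1) * Rpower (Rabs (th + 2*IZR l*PI)) (bet p al).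
Proof.
  intros H. rewrite f_term_eq. set (x := th + 2 * IZR l * PI) in *.
  assert (E : rabs_pow x al * sinc (x/2) ^ (p+1) = rabs_pow (Rabs x) al * sinc (Rabs x / 2) ^ (p+1)).
  { destruct (Rcase_abs x) as [Hx|Hx].
    - rewrite Rabs_left by auto. rewrite rabs_pow_opp.
      replace (- x / 2) with (- (x/2)) by field. rewrite sinc_opp. auto.
    - rewrite Rabs_right by auto. auto. }
  rewrite E, core by (apply Rabs_pos_lt; auto).
  rewrite Rabs_mult, <- RPow_abs, (Rabs_right (Rpower _ _)) by (left; apply Rpower_pos).
  apply Rmult_le_compat_r; [left; apply Rpower_pos|].
  apply pow_incr. split; [apply Rabs_pos|].
  rewrite Rabs_mult, (Rabs_right 2) by lra.
  pose proof (SIN_bound (Rabs x / 2)). assert (Rabs (sin (Rabs x / 2)) <= 1) by (apply Rabs_le; lra).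
  lra.
Qed.

Lemma PI_gt3 : 3 < PI.
Proof. pose proof PI2_3_2. lra. Qed.

Lemma exs_le (a b : nat -> R) : (forall n, Rabs (a n) <= b n) -> ex_series b -> ex_series a.
Proof. intros H Hb. apply (ex_series_le a b); auto. Qed.

Lemma ex_series_scal_R c (a : nat -> R) : ex_series a -> ex_series (fun n => c * a n).
Proof. intros H. apply (ex_series_ext (fun n => scal c (a n))). { intros; reflexivity. }
  exact (@ex_series_scal_l R_AbsRing R_NormedModule c a H). Qed.

Lemma bet_lt p al : (2 <= p)%nat -> al < 2 -> bet p al < -1.
Proof. intros Hp Ha. unfold bet. rewrite plus_INR. apply le_INR in Hp. simpl in *. lra. Qed.

Lemma TBk p al th l k : bet p al <= 0 -> INR k + 1 <= Rabs (th + 2*IZR l*PI) ->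
  Rabs (f_term p al th l) <= 2^(p+1) * Rpower (INR k + 1) (bet p al).
Proof. intros Hb Hk. assert (0 <= INR k) by apply pos_INR.
  eapply Rle_trans. apply TB.
  { intro E. rewrite E, Rabs_R0 in Hk. lra. }
  apply Rmult_le_compat_l. { apply pow_le; lra. }
  apply Rpower_base_decr; auto; lra. Qed.

Lemma zeta2 p al c : (2 <= p)%nat -> al < 2 ->
  ex_series (fun n => c * Rpower (INR n + 1) (bet p al)).
Proof. intros. apply ex_series_scal_R, zeta_ex, bet_lt; auto. Qed.

Lemma EXP p al th : (2 <= p)%nat -> al < 2 ->
  ex_series (fun n => f_term p al th (Z.of_nat n)).
Proof.
  intros Hp Ha. pose proof (bet_lt p al Hp Ha).
  destruct (INR_unbounded (Rabs th)) as [N HN].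
  apply (ex_series_incr_n _ (S N)).
  apply (exs_le _ (fun k => 2^(p+1) * Rpower (INR k + 1) (bet p al))); [|apply zeta2; auto].
  intros k. apply TBk; [lra|].
  rewrite <- INR_IZR_INZ, plus_INR, S_INR. pose proof PI_gt3. pose proof (pos_INR k).
  pose proof (pos_INR N). pose proof (Rle_abs (-th)). rewrite Rabs_Ropp in *.
  assert (2*(INR N+1+INR k)*PI >= 6*(INR N + 1 + INR k)) by nra.
  rewrite Rabs_right by lra. lra.
Qed.

Lemma EXN p al th : (2 <= p)%nat -> al < 2 ->
  ex_series (fun n => f_term p al th (- Z.of_nat (S n))).
Proof.
  intros Hp Ha. pose proof (bet_lt p al Hp Ha).
  destruct (INR_unbounded (Rabs th)) as [N HN].
  apply (ex_series_incr_n _ (S N)).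
  apply (exs_le _ (fun k => 2^(p+1) * Rpower (INR k + 1) (bet p al))); [|apply zeta2; auto].
  intros k. apply TBk; [lra|].
  rewrite opp_IZR, <- INR_IZR_INZ, S_INR, plus_INR, S_INR. pose proof PI_gt3. pose proof (pos_INR k).
  pose proof (pos_INR N). pose proof (Rle_abs th).
  assert (2*(INR N+1+INR k + 1)*PI >= 6*(INR N + 1 + INR k + 1)) by nra.
  rewrite Rabs_left by lra. lra.
Qed.

Definition q p al th n :=
  ((-1)^n)^(p+1) * ((-1)^(p+1) * Rpower (2*INR (S n)*PI + th) (bet p al)
                    + Rpower (2*INR (S n)*PI - th) (bet p al)).

Lemma abs_sgn n : Rabs ((-1)^n) = 1.
Proof. rewrite <- RPow_abs. replace (Rabs (-1)) with 1 by (rewrite Rabs_left; lra). apply pow1. Qed.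

Lemma Qbound p al th n : (2 <= p)%nat -> al < 2 -> Rabs th <= PI + 1 ->
  Rabs (q p al th n) <= 2 * Rpower (INR n + 1) (bet p al).
Proof.
  intros Hp Ha Ht. pose proof (bet_lt p al Hp Ha). unfold q.
  rewrite Rabs_mult, <- RPow_abs, abs_sgn, pow1, Rmult_1_l.
  eapply Rle_trans. apply Rabs_triang. rewrite Rabs_mult, abs_sgn, Rmult_1_l.
  pose proof PI_gt3. pose proof (pos_INR n). rewrite S_INR.
  pose proof (Rle_abs th). pose proof (Rle_abs (-th)). rewrite Rabs_Ropp in *.
  rewrite !Rabs_right by (left; apply Rpower_pos).
  assert (Rpower (2 * (INR n + 1) * PI + th) (bet p al) <= Rpower (INR n + 1) (bet p al))
    by (apply Rpower_base_decr; nra).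
  assert (Rpower (2 * (INR n + 1) * PI - th) (bet p al) <= Rpower (INR n + 1) (bet p al))
    by (apply Rpower_base_decr; nra).
  lra.
Qed.

Lemma EXQ p al th : (2 <= p)%nat -> al < 2 -> Rabs th <= PI + 1 -> ex_series (q p al th).
Proof. intros. apply (exs_le _ _ (fun n => Qbound p al th n H H0 H1)). apply zeta2; auto. Qed.

Lemma t0_eq p al th : f_term p al th 0%Z = rabs_pow th al * sinc (th/2) ^ (p+1).
Proof. unfold f_term. simpl IZR. do 3 f_equal; ring. Qed.

Lemma FT_neg p al th l : f_term p al (-th) l = f_term p al th (-l).
Proof. rewrite !f_term_eq, opp_IZR.
  replace (- th + 2 * IZR l * PI) with (- (th + 2 * - IZR l * PI)) by ring.
  rewrite rabs_pow_opp. replace (- (th + 2 * - IZR l * PI) / 2) with (- ((th + 2 * - IZR l * PI) / 2)) by field.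
  rewrite sinc_opp. auto. Qed.

Lemma FT_per p al th l : f_term p al (th + 2*PI) l = f_term p al th (l+1).
Proof. rewrite !f_term_eq, plus_IZR.
  replace (th + 2 * PI + 2 * IZR l * PI) with (th + 2 * (IZR l + 1) * PI) by ring. auto. Qed.

Section Idx.
Variables (p : nat) (al : R).
Hypothesis Hp : (2 <= p)%nat.
Hypothesis Ha : al < 2.

Lemma split_pos th : Series (fun n => f_term p al th (Z.of_nat n)) =
  f_term p al th 0%Z + Series (fun n => f_term p al th (Z.of_nat (S n))).
Proof. rewrite Series_incr_1 by (apply EXP; auto). reflexivity. Qed.

Lemma EXN0 th : ex_series (fun n => f_term p al th (- Z.of_nat n)).
Proof. apply ex_series_incr_1. apply EXN; auto. Qed.

Lemma split_neg th : Series (fun n => f_term p al th (- Z.of_nat n)) =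
  f_term p al th 0%Z + Series (fun n => f_term p al th (- Z.of_nat (S n))).
Proof. rewrite Series_incr_1 by (apply EXN0). reflexivity. Qed.

Lemma SYM th : f_pa p al th = f_pa p al (- th).
Proof.
  unfold f_pa.
  rewrite (Series_ext (fun n => f_term p al (- th) (Z.of_nat n)) (fun n => f_term p al th (- Z.of_nat n)))
    by (intros; apply FT_neg).
  rewrite (Series_ext (fun n => f_term p al (- th) (- Z.of_nat (S n))) (fun n => f_term p al th (Z.of_nat (S n))))
    by (intros; rewrite FT_neg, Z.opp_involutive; auto).
  rewrite split_pos, split_neg. ring.
Qed.

Lemma PER th : f_pa p al (th + 2*PI) = f_pa p al th.
Proof.
  unfold f_pa.
  rewrite (Series_ext (fun n => f_term p al (th + 2*PI) (Z.of_nat n)) (fun n => f_term p al th (Z.of_nat (S n))))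
    by (intros; rewrite FT_per; f_equal; lia).
  rewrite (Series_ext (fun n => f_term p al (th + 2*PI) (- Z.of_nat (S n))) (fun n => f_term p al th (- Z.of_nat n)))
    by (intros; rewrite FT_per; f_equal; lia).
  rewrite split_pos, split_neg. ring.
Qed.

Lemma DECOMP th : Rabs th <= PI + 1 ->
  f_pa p al th = f_term p al th 0%Z + (2 * sin (th/2))^(p+1) * Series (q p al th).
Proof.
  intros Ht. pose proof PI_gt3. pose proof (Rle_abs th). pose proof (Rle_abs (-th)). rewrite Rabs_Ropp in *.
  unfold f_pa. rewrite split_pos, Rplus_assoc. f_equal.
  rewrite <- Series_plus.
  2: { apply (proj1 (ex_series_incr_1 (fun n => f_term p al th (Z.of_nat n)))). apply EXP; auto. }
  2: { apply EXN; auto. }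
  rewrite <- Series_scal_l. apply Series_ext. intros n.
  pose proof (pos_INR n).
  rewrite TFpos, TFneg by (rewrite S_INR; nra).
  unfold q. replace (th + 2 * INR (S n) * PI) with (2 * INR (S n) * PI + th) by ring.
  replace ((-1)^(S n)) with (-1 * (-1)^n) by (simpl; ring).
  rewrite (Rpow_mult_distr (-1) ((-1)^n)). ring.
Qed.

End Idx.

Lemma pair_series (a : nat -> R) l : is_series a l ->
  is_series (fun m => a (2*m)%nat + a (2*m+1)%nat) l.
Proof.
  intros H.
  assert (E : forall m, sum_n (fun m => a (2*m)%nat + a (2*m+1)%nat) m = sum_n a (S (2*m))).
  { intros m. rewrite !sum_n_Reals. induction m.
    - simpl. ring.
    - rewrite tech5, IHm. replace (S (2 * S m)) with (S (S (S (2*m)))) by lia.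
      rewrite !tech5. replace (2 * S m)%nat with (S (S (2*m))) by lia.
      replace (S (S (2 * m)) + 1)%nat with (S (S (S (2*m)))) by lia.
      rewrite <- Rplus_assoc. reflexivity. }
  assert (H' : is_lim_seq (sum_n a) l) by exact H.
  assert (G : is_lim_seq (sum_n (fun m => a (2*m)%nat + a (2*m+1)%nat)) l).
  { eapply is_lim_seq_ext. { intros; symmetry; apply E. }
    apply (is_lim_seq_subseq (sum_n a) l (fun m => S (2*m))).
    { apply eventually_subseq; intros; lia. }
    exact H'. }
  exact G.
Qed.

Lemma pair_Series (a : nat -> R) : ex_series a ->
  Series a = Series (fun m => a (2*m)%nat + a (2*m+1)%nat) /\
  ex_series (fun m => a (2*m)%nat + a (2*m+1)%nat).
Proof. intros H. pose proof (pair_series a _ (Series_correct a H)) as H2.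
  split. symmetry; apply is_series_unique; auto. eexists; eauto. Qed.

Lemma Series_nonneg (a : nat -> R) : (forall n, 0 <= a n) -> ex_series a -> 0 <= Series a.
Proof. intros H Ha.
  assert (E : Series (fun _ : nat => 0 * 0) = 0) by (rewrite Series_scal_l; ring).
  rewrite <- E. apply Series_le; auto. intros; split; [lra|]. rewrite Rmult_0_l; auto. Qed.

Lemma CONV r s th : r < 0 -> 0 <= th <= PI -> 2*PI <= s ->
  Rpower (s+th) r + Rpower (s+2*PI-th) r <= Rpower (s-th) r + Rpower (s+2*PI+th) r.
Proof.
  intros Hr Ht Hs. pose proof PI_gt3.
  pose proof (bernoulli r (s+th) (s-th) Hr ltac:(lra) ltac:(lra)) as B1.
  pose proof (bernoulli r (s+2*PI-th) (s+2*PI+th) Hr ltac:(lra) ltac:(lra)) as B2.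
  assert (D : Rpower (s+2*PI-th) (r-1) <= Rpower (s+th) (r-1)) by (apply Rpower_base_decr; lra).
  assert (P : 0 <= th * (-r) * (Rpower (s+th) (r-1) - Rpower (s+2*PI-th) (r-1))).
  { apply Rmult_le_pos; [apply Rmult_le_pos|]; lra. }
  replace (s - th - (s + th)) with (-2*th) in B1 by ring.
  replace (s + 2*PI + th - (s + 2*PI - th)) with (2*th) in B2 by ring.
  nra.
Qed.

Lemma tau_cases p : (-1)^(p+1) = 1 \/ (-1)^(p+1) = -1.
Proof. destruct (Nat.Even_or_Odd (p+1)) as [[k Hk]|[k Hk]]; rewrite Hk.
  - left. apply pow_1_even.
  - right. rewrite Nat.add_1_r. apply pow_1_odd. Qed.

Lemma u_even p m : ((-1)^(2*m))^(p+1) = 1.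
Proof. rewrite pow_1_even. apply pow1. Qed.

Lemma u_odd p m : ((-1)^(2*m+1))^(p+1) = (-1)^(p+1).
Proof. rewrite Nat.add_1_r, pow_1_odd. auto. Qed.

Lemma DEC p al th m : (2 <= p)%nat -> al < 2 -> 0 <= th <= PI ->
  0 <= q p al th (2*m) + q p al th (2*m+1).
Proof.
  intros Hp Ha Ht. pose proof (bet_lt p al Hp Ha). unfold q.
  rewrite u_even, u_odd.
  replace (INR (S (2*m+1))) with (INR (S (2*m)) + 1) by (rewrite !S_INR, plus_INR; simpl; ring).
  set (s := 2 * INR (S (2*m)) * PI).
  replace (2 * (INR (S (2 * m)) + 1) * PI) with (s + 2*PI) by (unfold s; ring).
  assert (Hs : 2*PI <= s). { unfold s. rewrite S_INR. pose proof (pos_INR (2*m)). pose proof PI_gt3. nra. }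
  pose proof (CONV (bet p al) s th ltac:(lra) Ht Hs).
  pose proof (Rpower_pos (s+th) (bet p al)). pose proof (Rpower_pos (s-th) (bet p al)).
  pose proof (Rpower_pos (s+2*PI+th) (bet p al)). pose proof (Rpower_pos (s+2*PI-th) (bet p al)).
  destruct (tau_cases p) as [E|E]; rewrite E; nra.
Qed.

Lemma Qsum_bound p al th : (2 <= p)%nat -> al < 2 -> Rabs th <= PI + 1 ->
  Series (q p al th) <= Series (fun n => 2 * Rpower (INR n + 1) (bet p al)).
Proof.
  intros Hp Ha Ht.
  assert (EA : ex_series (fun n => Rabs (q p al th n))).
  { apply (exs_le _ (fun n => 2 * Rpower (INR n + 1) (bet p al)));
      [intros n; rewrite Rabs_Rabsolu; apply Qbound; auto | apply zeta2; auto]. }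
  eapply Rle_trans. apply Rle_abs. eapply Rle_trans. apply Series_Rabs; auto.
  apply Series_le. { intros n; split; [apply Rabs_pos| apply Qbound; auto]. }
  apply zeta2; auto.
Qed.

Lemma Qsum_nonneg p al th : (2 <= p)%nat -> al < 2 -> 0 <= th <= PI -> 0 <= Series (q p al th).
Proof.
  intros Hp Ha Ht.
  assert (Hb : Rabs th <= PI + 1) by (rewrite Rabs_right; lra).
  destruct (pair_Series _ (EXQ p al th Hp Ha Hb)) as [E X]. rewrite E.
  apply Series_nonneg; auto. intros; apply DEC; auto.
Qed.

Lemma BOUNDS p al : (2 <= p)%nat -> 1 < al < 2 ->
  exists C : R, forall theta : R, 0 <= theta <= PI ->
     rabs_pow theta al * (sinc (theta / 2)) ^ (p + 1) <= f_pa p al theta /\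
     f_pa p al theta <=
       rabs_pow theta al * (sinc (theta / 2)) ^ (p + 1)
       + C * (sin (theta / 2)) ^ (p + 1).
Proof.
  intros Hp Ha.
  exists (2^(p+1) * Series (fun n => 2 * Rpower (INR n + 1) (bet p al))).
  intros th Ht. pose proof PI_gt3.
  assert (Hb : Rabs th <= PI + 1) by (rewrite Rabs_right; lra).
  rewrite DECOMP, t0_eq by (auto; lra).
  assert (Hs : 0 <= sin (th/2)) by (apply sin_ge_0; lra).
  assert (Hc : 0 <= (2 * sin (th/2))^(p+1)) by (apply pow_le; lra).
  pose proof (Qsum_nonneg p al th Hp ltac:(lra) Ht).
  pose proof (Qsum_bound p al th Hp ltac:(lra) Hb).
  split.
  - pose proof (Rmult_le_pos _ _ Hc H0). lra.
  - rewrite Rpow_mult_distr in *. apply Rplus_le_compat_l.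
    replace (2 ^ (p + 1) * Series (fun n : nat => 2 * Rpower (INR n + 1) (bet p al)) * sin (th / 2) ^ (p + 1))
      with (2 ^ (p + 1) * sin (th / 2) ^ (p + 1) * Series (fun n : nat => 2 * Rpower (INR n + 1) (bet p al))) by ring.
    apply Rmult_le_compat_l; auto.
Qed.

Definition u p n := ((-1)^n)^(p+1).

Lemma abs_u p n : Rabs (u p n) = 1.
Proof. unfold u. rewrite <- RPow_abs, abs_sgn. apply pow1. Qed.

Lemma exU p al (g : nat -> R) : (2 <= p)%nat -> al < 2 -> (forall n, INR n + 1 <= g n) ->
  ex_series (fun n => u p n * Rpower (g n) (bet p al)).
Proof.
  intros Hp Ha Hg. pose proof (bet_lt p al Hp Ha).
  apply (exs_le _ (fun n => 1 * Rpower (INR n + 1) (bet p al))); [|apply zeta2; auto].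
  intros n. rewrite Rabs_mult, abs_u, Rabs_right by (left; apply Rpower_pos).
  apply Rmult_le_compat_l; [lra|]. pose proof (pos_INR n). pose proof (Hg n).
  apply Rpower_base_decr; auto; lra.
Qed.

Lemma FPN p al th : 0 < th < 2*PI ->
  f_pa p al th = (2 * sin (th/2))^(p+1) *
    (Series (fun n => u p n * Rpower (th + 2*INR n*PI) (bet p al)) +
     Series (fun n => u p n * Rpower (2*INR (S n)*PI - th) (bet p al))).
Proof.
  intros Ht. unfold f_pa. rewrite Rmult_plus_distr_l, <- !Series_scal_l. f_equal.
  - apply Series_ext; intros n. pose proof (pos_INR n). pose proof PI_gt3.
    rewrite TFpos by nra. unfold u; ring.
  - apply Series_ext; intros n. pose proof (pos_INR n). pose proof PI_gt3.
    rewrite TFneg by (rewrite S_INR; nra). unfold u; ring.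
Qed.

Lemma Rpower_mul x y z : 0 < x -> 0 < y -> Rpower (x*y) z = Rpower x z * Rpower y z.
Proof. intros; rewrite Rpower_mult_distr; auto. Qed.

Lemma F_PI p al : f_pa p al PI = 2^(p+1) * 2 * Rpower PI (bet p al) *
   Series (fun n => u p n * Rpower (2*INR n + 1) (bet p al)).
Proof.
  pose proof PI_gt3. rewrite FPN by lra.
  replace (PI/2) with (PI/2) by auto. rewrite sin_PI2. replace (2*1) with 2 by ring.
  rewrite (Series_ext (fun n => u p n * Rpower (PI + 2*INR n*PI) (bet p al))
     (fun n => Rpower PI (bet p al) * (u p n * Rpower (2*INR n + 1) (bet p al)))).
  2: { intros n. pose proof (pos_INR n).
       replace (PI + 2*INR n*PI) with ((2*INR n + 1)*PI) by ring. rewrite Rpower_mul by lra. ring. }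
  rewrite (Series_ext (fun n => u p n * Rpower (2 * INR (S n) * PI - PI) (bet p al))
     (fun n => Rpower PI (bet p al) * (u p n * Rpower (2*INR n + 1) (bet p al)))).
  2: { intros n. pose proof (pos_INR n). rewrite S_INR.
       replace (2 * (INR n + 1) * PI - PI) with ((2*INR n + 1)*PI) by ring. rewrite Rpower_mul by lra. ring. }
  rewrite !Series_scal_l. ring.
Qed.

Lemma F_PI2 p al : f_pa p al (PI/2) = (2 * sin (PI/4))^(p+1) * Rpower (PI/2) (bet p al) *
   (Series (fun n => u p n * Rpower (4*INR n + 1) (bet p al)) +
    Series (fun n => u p n * Rpower (4*INR n + 3) (bet p al))).
Proof.
  pose proof PI_gt3. rewrite FPN by lra.
  replace (PI/2/2) with (PI/4) by field.
  rewrite (Series_ext (fun n => u p n * Rpower (PI/2 + 2*INR n*PI) (bet p al))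
     (fun n => Rpower (PI/2) (bet p al) * (u p n * Rpower (4*INR n + 1) (bet p al)))).
  2: { intros n. pose proof (pos_INR n).
       replace (PI/2 + 2*INR n*PI) with ((4*INR n + 1)*(PI/2)) by field. rewrite Rpower_mul by lra. ring. }
  rewrite (Series_ext (fun n => u p n * Rpower (2 * INR (S n) * PI - PI/2) (bet p al))
     (fun n => Rpower (PI/2) (bet p al) * (u p n * Rpower (4*INR n + 3) (bet p al)))).
  2: { intros n. pose proof (pos_INR n). rewrite S_INR.
       replace (2 * (INR n + 1) * PI - PI/2) with ((4*INR n + 3)*(PI/2)) by field. rewrite Rpower_mul by lra. ring. }
  rewrite !Series_scal_l. ring.
Qed.

Lemma KEY p al : Rpower 2 ((2 * al + 1 - INR p) / 2) * (2 * sin (PI/4))^(p+1) * Rpower (PI/2) (bet p al)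
  = 2^(p+1) * 2 * Rpower PI (bet p al).
Proof.
  pose proof PI_gt3.
  assert (S2 : 2 * sin (PI/4) = Rpower 2 (/2)).
  { rewrite sin_PI4, Rpower_sqrt by lra. pose proof (sqrt_sqrt 2 ltac:(lra)).
    assert (0 < sqrt 2) by (apply sqrt_lt_R0; lra).
    assert (E : 2 * (1 / sqrt 2) = sqrt 2 * sqrt 2 / sqrt 2) by (rewrite H0; field; lra).
    rewrite E. field. lra. }
  rewrite S2, <- Rpower_pow by apply Rpower_pos. rewrite Rpower_mult.
  replace (2^(p+1)*2) with (2^(p+2)) by (replace (p+2)%nat with (S (p+1)) by lia; simpl; ring).
  rewrite <- Rpower_pow by lra.
  unfold Rpower. rewrite ln_div by lra. rewrite <- !exp_plus. f_equal.
  unfold bet. rewrite !plus_INR. simpl. field.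
Qed.

Lemma ex_plus_R (a b : nat -> R) : ex_series a -> ex_series b -> ex_series (fun n => a n + b n).
Proof. intros. exact (@ex_series_plus R_AbsRing R_NormedModule a b H H0). Qed.
Lemma ex_minus_R (a b : nat -> R) : ex_series a -> ex_series b -> ex_series (fun n => a n - b n).
Proof. intros. exact (@ex_series_minus R_AbsRing R_NormedModule a b H H0). Qed.
Lemma ex_opp_R (a : nat -> R) : ex_series a -> ex_series (fun n => - a n).
Proof. intros. exact (@ex_series_opp R_AbsRing R_NormedModule a H). Qed.

Lemma AB p al : (2 <= p)%nat -> al < 2 ->
  Series (fun n => u p n * Rpower (2*INR n + 1) (bet p al)) <=
  Series (fun n => u p n * Rpower (4*INR n + 1) (bet p al)) +
  Series (fun n => u p n * Rpower (4*INR n + 3) (bet p al)).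
Proof.
  intros Hp Ha. pose proof (bet_lt p al Hp Ha).
  set (w := fun x => Rpower x (bet p al)).
  assert (EA : ex_series (fun n => u p n * Rpower (2*INR n + 1) (bet p al)))
    by (apply exU; auto; intros n; pose proof (pos_INR n); lra).
  assert (EB : ex_series (fun n => u p n * Rpower (4*INR n + 1) (bet p al)))
    by (apply exU; auto; intros n; pose proof (pos_INR n); lra).
  assert (EC : ex_series (fun n => u p n * Rpower (4*INR n + 3) (bet p al)))
    by (apply exU; auto; intros n; pose proof (pos_INR n); lra).
  destruct (pair_Series _ EA) as [EA1 EA2]. rewrite EA1.
  rewrite <- Series_plus by auto.
  apply Rminus_le. rewrite <- Series_minus by (auto; apply (ex_plus_R _ _ EB EC)).
  set (r := fun n => u p (2 * n) * Rpower (2 * INR (2 * n) + 1) (bet p al) +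
       u p (2 * n + 1) * Rpower (2 * INR (2 * n + 1) + 1) (bet p al) -
       (u p n * Rpower (4 * INR n + 1) (bet p al) + u p n * Rpower (4 * INR n + 3) (bet p al))).
  change (Series r <= 0).
  assert (Er : ex_series r).
  { unfold r. apply ex_minus_R; auto. apply (ex_plus_R _ _ EB EC). }
  destruct (pair_Series _ Er) as [Er1 Er2]. rewrite Er1.
  assert (0 <= - Series (fun m => r (2 * m)%nat + r (2 * m + 1)%nat)); [|lra].
  rewrite <- Series_opp. apply Series_nonneg.
  2: { apply ex_opp_R; auto. }
  intros j. unfold r. unfold u.
  rewrite !u_even, !u_odd.
  set (J := INR j).
  assert (I1 : INR (2*j) = 2*J) by (unfold J; rewrite mult_INR; simpl; ring).
  assert (I2 : INR (2*(2*j)) = 4*J) by (unfold J; rewrite !mult_INR; simpl; ring).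
  assert (I4 : INR (2*j+1) = 2*J+1) by (unfold J; rewrite plus_INR, mult_INR; simpl; ring).
  assert (I5 : INR (2*(2*j+1)) = 4*J+2) by (unfold J; rewrite mult_INR, plus_INR, mult_INR; simpl; ring).
  assert (I3 : INR (2*(2*j)+1) = 4*J+1) by (unfold J; rewrite plus_INR, !mult_INR; simpl; ring).
  assert (I6 : INR (2*(2*j+1)+1) = 4*J+3) by (unfold J; rewrite plus_INR, mult_INR, plus_INR, mult_INR; simpl; ring).
  rewrite I1, I2, I3, I4, I5, I6.
  replace (2*(4*J)+1) with (8*J+1) by ring.
  replace (2*(4*J+1)+1) with (8*J+3) by ring.
  replace (4*(2*J)+1) with (8*J+1) by ring.
  replace (4*(2*J)+3) with (8*J+3) by ring.
  replace (2*(4*J+2)+1) with (8*J+5) by ring.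
  replace (2*(4*J+3)+1) with (8*J+7) by ring.
  replace (4*(2*J+1)+1) with (8*J+5) by ring.
  replace (4*(2*J+1)+3) with (8*J+7) by ring.
  assert (0 <= J) by apply pos_INR.
  assert (Rpower (8*J+5) (bet p al) <= Rpower (8*J+3) (bet p al))
    by (apply Rpower_base_decr; lra).
  destruct (tau_cases p) as [E|E]; rewrite E; lra.
Qed.

Lemma t0_pos p al th : 1 < al -> 0 < th <= PI -> 0 < rabs_pow th al * sinc (th/2) ^ (p+1).
Proof.
  intros Ha Ht. pose proof PI_gt3. unfold rabs_pow, sinc.
  destruct (Req_EM_T th 0); [lra|]. destruct (Req_EM_T (th/2) 0); [lra|].
  apply Rmult_lt_0_compat; [apply Rpower_pos|]. apply pow_lt.
  apply Rdiv_lt_0_compat; [apply sin_gt_0|]; lra.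
Qed.

Lemma RATIO p al : (2 <= p)%nat -> al < 2 ->
  f_pa p al PI <= Rpower 2 ((2 * al + 1 - INR p) / 2) * f_pa p al (PI/2).
Proof.
  intros Hp Ha. rewrite F_PI, F_PI2, <- !Rmult_assoc, KEY.
  apply Rmult_le_compat_l; [|apply AB; auto].
  pose proof (Rpower_pos PI (bet p al)). pose proof (pow_le 2 (p+1) ltac:(lra)). nra.
Qed.

Lemma cont_plusR (f g : R -> R) x : continuous f x -> continuous g x -> continuous (fun y => f y + g y) x.
Proof. intros; apply (continuous_plus f g); auto. Qed.
Lemma cont_multR (f g : R -> R) x : continuous f x -> continuous g x -> continuous (fun y => f y * g y) x.
Proof. intros; apply (continuous_mult f g); auto. Qed.

Lemma exd_cont (f : R -> R) x : ex_derive f x -> continuous f x.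
Proof. intros H. exact (@ex_derive_continuous R_AbsRing R_NormedModule f x H). Qed.

Lemma abs_sin_pos y : 0 < y -> Rabs (sin y) <= y.
Proof.
  intros Hy. pose proof (sin_lt_x y Hy). pose proof (SIN_bound y). pose proof PI_gt3.
  destruct (Rle_lt_dec 1 y).
  - apply Rabs_le; lra.
  - assert (0 < sin y) by (apply sin_gt_0; lra). rewrite Rabs_right; lra.
Qed.

Lemma abs_sin_le y : Rabs (sin y) <= Rabs y.
Proof.
  destruct (Rtotal_order y 0) as [H|[H|H]].
  - replace y with (- - y) by ring. rewrite sin_neg, !Rabs_Ropp. rewrite (Rabs_left y) by lra.
    apply abs_sin_pos; lra.
  - subst. rewrite sin_0. lra.
  - rewrite (Rabs_right y) by lra. apply abs_sin_pos; lra.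
Qed.

Lemma sinc_le1 y : Rabs (sinc y) <= 1.
Proof.
  unfold sinc. destruct (Req_EM_T y 0). { rewrite Rabs_R1; lra. }
  unfold Rdiv. rewrite Rabs_mult, Rabs_inv. pose proof (abs_sin_le y).
  assert (0 < Rabs y) by (apply Rabs_pos_lt; auto).
  apply (Rmult_le_reg_r (Rabs y)); auto. rewrite Rmult_assoc, Rinv_l by lra. lra.
Qed.

Lemma t0_small p al x : 1 < al -> Rabs x <= 1 -> Rabs (f_term p al x 0%Z) <= Rabs x.
Proof.
  intros Ha Hx. rewrite t0_eq, Rabs_mult.
  assert (S1 : Rabs (sinc (x/2) ^ (p+1)) <= 1).
  { rewrite <- RPow_abs. rewrite <- (pow1 (p+1)). apply pow_incr. split; [apply Rabs_pos|apply sinc_le1]. }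
  assert (R1 : Rabs (rabs_pow x al) <= Rabs x).
  { unfold rabs_pow. destruct (Req_EM_T x 0). { rewrite Rabs_R0; apply Rabs_pos. }
    assert (0 < Rabs x) by (apply Rabs_pos_lt; auto).
    rewrite Rabs_right by (left; apply Rpower_pos).
    replace al with (1 + (al - 1)) by ring. rewrite Rpower_plus, Rpower_1 by auto.
    assert (Rpower (Rabs x) (al - 1) <= Rpower 1 (al - 1)) by (apply Rle_Rpower_l; lra).
    rewrite Rpower_one in H0. nra. }
  pose proof (Rabs_pos (sinc (x / 2) ^ (p + 1))). pose proof (Rabs_pos (rabs_pow x al)). nra.
Qed.

Lemma cont_t0 p al c : 1 < al -> 0 <= c -> continuous (fun th => f_term p al th 0%Z) c.
Proof.
  intros Ha Hc. destruct Hc as [Hc|Hc].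
  - apply (continuous_ext_loc _ (fun th => Rpower th al * (sin (th/2) / (th/2))^(p+1))).
    + assert (Hc2 : 0 < c/2) by lra. exists (mkposreal _ Hc2). intros y Hy.
      change (Rabs (y - c) < c/2) in Hy. apply Rabs_def2 in Hy.
      rewrite t0_eq. unfold rabs_pow, sinc.
      destruct (Req_EM_T y 0); [lra|]. destruct (Req_EM_T (y/2) 0); [lra|].
      rewrite Rabs_right by lra. auto.
    + apply exd_cont. unfold Rpower. auto_derive. repeat split; lra.
  - subst c. apply filterlim_locally. intros eps.
    assert (Hd : 0 < Rmin 1 eps) by (apply Rmin_pos; [lra| apply cond_pos]).
    exists (mkposreal _ Hd). intros y Hy. change (Rabs (y - 0) < Rmin 1 eps) in Hy.
    change (Rabs (f_term p al y 0%Z - f_term p al 0 0%Z) < eps).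
    rewrite Rminus_0_r in Hy.
    assert (E0 : f_term p al 0 0%Z = 0).
    { rewrite t0_eq. unfold rabs_pow. destruct (Req_EM_T 0 0); [ring|lra]. }
    rewrite E0, Rminus_0_r.
    pose proof (Rmin_l 1 eps). pose proof (Rmin_r 1 eps).
    pose proof (t0_small p al y Ha ltac:(lra)). lra.
Qed.

Lemma cont_q p al k y : Rabs y < PI + 1 -> continuous (fun th => q p al th k) y.
Proof.
  intros Hy. pose proof PI_gt3. pose proof (pos_INR k). apply Rabs_def2 in Hy.
  apply exd_cont. unfold q, Rpower. rewrite S_INR. auto_derive. split; [nra|split; [nra|auto]].
Qed.

Lemma contQ p al y : (2 <= p)%nat -> al < 2 -> Rabs y < PI + 1 ->
  continuous (fun th => Series (q p al th)) y.
Proof.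
  intros Hp Ha Hy. pose proof PI_gt3.
  assert (Hr : 0 < PI + 1) by lra. set (r := mkposreal _ Hr).
  apply continuity_pt_filterlim.
  apply (CVU_continuity (fun n th => sum_f_R0 (fun k => q p al th k) n) (fun th => Series (q p al th)) 0 r).
  - intros eps Heps.
    set (B := fun n => 2 * Rpower (INR n + 1) (bet p al)).
    assert (EB : ex_series B) by (apply zeta2; auto).
    pose proof (proj1 (is_series_Reals B (Series B)) (Series_correct B EB) eps Heps) as [N HN].
    exists N. intros n z Hn Hz. change (Rabs (z - 0) < PI + 1) in Hz. rewrite Rminus_0_r in Hz.
    assert (Hz' : Rabs z <= PI + 1) by lra.
    change (Rabs (Series (q p al z) - sum_f_R0 (q p al z) n) < eps).
    rewrite (Series_incr_n (q p al z) (S n)) by (try lia; apply EXQ; auto).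
    specialize (HN n Hn). unfold R_dist in HN.
    rewrite (Series_incr_n B (S n)) in HN by (try lia; auto). simpl pred in *.
    match goal with |- Rabs ?a < _ => replace a with (Series (fun k : nat => q p al z (S n + k)%nat)) by ring end.
    replace (sum_f_R0 B n - (sum_f_R0 B n + Series (fun k : nat => B (S n + k)%nat))) with
      (- Series (fun k : nat => B (S n + k)%nat)) in HN by ring.
    rewrite Rabs_Ropp in HN.
    assert (ET : ex_series (fun k => B (S n + k)%nat)) by (apply (proj1 (ex_series_incr_n B (S n))); auto).
    assert (EA : ex_series (fun k => Rabs (q p al z (S n + k)%nat))).
    { apply (exs_le _ (fun k => B (S n + k)%nat)); auto. intros k. rewrite Rabs_Rabsolu. apply Qbound; auto. }
    eapply Rle_lt_trans. apply Series_Rabs; auto.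
    eapply Rle_lt_trans; [|apply HN]. eapply Rle_trans; [|apply Rle_abs].
    apply Series_le; auto. intros k; split; [apply Rabs_pos| apply Qbound; auto].
  - intros n z Hz. change (Rabs (z - 0) < PI + 1) in Hz. rewrite Rminus_0_r in Hz.
    apply continuity_pt_filterlim. induction n.
    + simpl. apply cont_q; auto.
    + simpl. apply cont_plusR; auto. apply cont_q; auto.
  - change (Rabs (y - 0) < PI + 1). rewrite Rminus_0_r. auto.
Qed.

Definition hh p al th := f_term p al th 0%Z + (2 * sin (th/2))^(p+1) * Series (q p al th).

Lemma cont_h p al c : (2 <= p)%nat -> 1 < al < 2 -> 0 <= c <= PI -> continuity_pt (hh p al) c.
Proof.
  intros Hp Ha Hc. pose proof PI_gt3. apply continuity_pt_filterlim. unfold hh.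
  apply (cont_plusR (fun th => f_term p al th 0%Z) (fun th => (2*sin(th/2))^(p+1) * Series (q p al th))).
  { apply cont_t0; lra. }
  apply (cont_multR (fun th => (2*sin(th/2))^(p+1)) (fun th => Series (q p al th))). { apply exd_cont. auto_derive. auto. }
  apply contQ; try lra; auto. rewrite Rabs_right; lra.
Qed.

Lemma PERn p al m th : (2 <= p)%nat -> al < 2 -> f_pa p al (th + 2 * INR m * PI) = f_pa p al th.
Proof.
  intros Hp Ha. induction m.
  - simpl. f_equal. ring.
  - rewrite S_INR. replace (th + 2 * (INR m + 1) * PI) with ((th + 2 * INR m * PI) + 2*PI) by ring.
    rewrite PER; auto.
Qed.

Lemma RED p al th : (2 <= p)%nat -> al < 2 -> exists t, 0 <= t <= PI /\ f_pa p al th = f_pa p al t.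
Proof.
  intros Hp Ha. pose proof PI_gt3.
  set (x := (th + PI) / (2*PI)).
  destruct (archimed x) as [A1 A2].
  set (k := (up x - 1)%Z).
  assert (Hk : IZR k <= x < IZR k + 1) by (unfold k; rewrite minus_IZR; lra).
  unfold x in Hk.
  assert (Hk2 : 2*PI*IZR k <= th + PI < 2*PI*IZR k + 2*PI).
  { destruct Hk as [K1 K2]. split.
    - apply (Rmult_le_compat_l (2*PI)) in K1; [|lra]. replace (2*PI*((th+PI)/(2*PI))) with (th+PI) in K1 by (field; lra). lra.
    - apply (Rmult_lt_compat_l (2*PI)) in K2; [|lra]. replace (2*PI*((th+PI)/(2*PI))) with (th+PI) in K2 by (field; lra). lra. }
  set (t0 := th - 2 * IZR k * PI).
  assert (Ht0 : - PI <= t0 < PI) by (unfold t0; lra).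
  assert (E : f_pa p al th = f_pa p al t0).
  { destruct (Z.le_gt_cases 0 k) as [Hk0|Hk0].
    - destruct (IZN k Hk0) as [m Hm]. unfold t0. rewrite Hm, <- INR_IZR_INZ.
      rewrite <- (PERn p al m (th - 2 * INR m * PI)) by auto. f_equal. ring.
    - assert (0 <= - k)%Z by lia. destruct (IZN (-k) H0) as [m Hm].
      unfold t0. replace k with (- Z.of_nat m)%Z by lia. rewrite opp_IZR, <- INR_IZR_INZ.
      replace (th - 2 * - INR m * PI) with (th + 2 * INR m * PI) by ring.
      rewrite PERn; auto. }
  destruct (Rle_lt_dec 0 t0).
  - exists t0. split; [lra|auto].
  - exists (- t0). split; [lra|]. rewrite E. apply SYM; auto.
Qed.

Lemma MAXI p al : (2 <= p)%nat -> 1 < al < 2 ->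
  exists Mx, forall th, f_pa p al th <= f_pa p al Mx.
Proof.
  intros Hp Ha. pose proof PI_gt3.
  destruct (continuity_ab_maj (hh p al) 0 PI ltac:(lra) (fun c Hc => cont_h p al c Hp Ha Hc)) as [Mx [H1 H2]].
  exists Mx. intros th. destruct (RED p al th Hp ltac:(lra)) as [t [Ht E]]. rewrite E.
  assert (D : forall s, 0 <= s <= PI -> f_pa p al s = hh p al s).
  { intros s Hs. unfold hh. apply DECOMP; try lra; auto. rewrite Rabs_right; lra. }
  rewrite !D by auto. apply H1; auto.
Qed.

Theorem theorem5p2 (alpha : R) (p : nat) :
  1 < alpha < 2 -> (2 <= p)%nat ->
  (forall theta : R, f_pa p alpha theta = f_pa p alpha (- theta)) /\
  (exists C : R, forall theta : R, 0 <= theta <= PI ->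
     rabs_pow theta alpha * (sinc (theta / 2)) ^ (p + 1) <= f_pa p alpha theta /\
     f_pa p alpha theta <=
       rabs_pow theta alpha * (sinc (theta / 2)) ^ (p + 1)
       + C * (sin (theta / 2)) ^ (p + 1)) /\
  (exists M : R,
     (forall theta : R, f_pa p alpha theta <= M) /\
     (exists theta0 : R, f_pa p alpha theta0 = M) /\
     f_pa p alpha PI / M <= f_pa p alpha PI / f_pa p alpha (PI / 2) /\
     f_pa p alpha PI / f_pa p alpha (PI / 2)
       <= Rpower 2 ((2 * alpha + 1 - INR p) / 2)).
Proof.
  intros Ha Hp. pose proof PI_gt3.
  split. { intros; apply SYM; auto; lra. }
  split. { apply BOUNDS; auto. }
  destruct (BOUNDS p alpha Hp Ha) as [C HC].
  assert (Fpi : 0 <= f_pa p alpha PI).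
  { destruct (HC PI ltac:(lra)) as [L _]. pose proof (t0_pos p alpha PI ltac:(lra) ltac:(lra)). lra. }
  assert (Fpi2 : 0 < f_pa p alpha (PI/2)).
  { destruct (HC (PI/2) ltac:(lra)) as [L _]. pose proof (t0_pos p alpha (PI/2) ltac:(lra) ltac:(lra)). lra. }
  destruct (MAXI p alpha Hp Ha) as [Mx HM].
  exists (f_pa p alpha Mx). split; [auto|]. split; [exists Mx; auto|]. split.
  - unfold Rdiv. apply Rmult_le_compat_l; auto. apply Rinv_le_contravar; auto.
  - pose proof (RATIO p alpha Hp ltac:(lra)).
    apply (Rmult_le_reg_r (f_pa p alpha (PI/2))); auto. unfold Rdiv.
    rewrite Rmult_assoc, Rinv_l by lra. lra.
Qed.
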